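(* In the setting below, let $\sigma,\tau>0$ satisfy $\sigma\tau\|A\|^2+\tau L\le1$ and let $(x^{(k)},z^{(k)})$ be generated either by the Bregman primal Condat--V\~u algorithm \[x^{(k+1)}=\mathrm{prox}^{\phi_{\mathrm p}}_{\tau f}\big(x^{(k)},\tau A^Tz^{(k)}+\tau\nabla h(x^{(k)})\big),\quad z^{(k+1)}=\mathrm{prox}^{\phi_{\mathrm d}}_{\sigma g^*}\big(z^{(k)},-\sigma A(2x^{(k+1)}-x^{(k)})\big),\] or by the Bregman dual Condat--V\~u algorithm \[z^{(k+1)}=\mathrm{prox}^{\phi_{\mathrm d}}_{\sigma g^*}\big(z^{(k)},-\sigma Ax^{(k)}\big),\quad x^{(k+1)}=\mathrm{prox}^{\phi_{\mathrm p}}_{\tau f}\big(x^{(k)},\tau A^T(2z^{(k+1)}-z^{(k)})+\tau\nabla h(x^{(k)})\big),\] starting from $x^{(0)}\in\operatorname{int}(\operatorname{dom}\phi_{\mathrm p})\cap\operatorname{dom} h$, $z^{(0)}\in\operatorname{int}(\operatorname{dom}\phi_{\mathrm d})$. Let $x^{(k)}_{\mathrm{avg}}=\frac1k\sum_{i=1}^kx^{(i)}$, $z^{(k)}_{\mathrm{avg}}=\frac1k\sum_{i=1}^kz^{(i)}$ for $k\ge1$. Then for all $k\ge1$, all $x\in\operatorname{dom} f\cap\operatorname{dom}\phi_{\mathrm p}$ and all $z\in\operatorname{dom} g^*\cap\operatorname{dom}\phi_{\mathrm d}$, \[\mathcal L(x^{(k)}_{\mathrm{avg}},z)-\mathcal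 L(x,z^{(k)}_{\mathrm{avg}})\le\frac2k\Big(\frac1\tau d_{\mathrm p}(x,x^{(0)})+\frac1\sigma d_{\mathrm d}(z,z^{(0)})\Big).\]
   Context: Setting: $f:\mathbb R^n\to\mathbb R\cup\{+\infty\}$, $g:\mathbb R^m\to\mathbb R\cup\{+\infty\}$, $h$ are closed convex functions, $h$ differentiable on its open convex domain, $f+h$ and $g$ proper, $A\in\mathbb R^{m\times n}$; $g^*$ is the conjugate of $g$. Lagrangian: $\mathcal L(x,z)=f(x)+h(x)+\langle z,Ax\rangle-g^*(z)$ (value $+\infty$ if $x\notin\operatorname{dom}(f+h)$, $-\infty$ if $x\in\operatorname{dom}(f+h)$, $z\notin\operatorname{dom}g^*$). A Bregman kernel $\phi$ is convex with $\operatorname{int}(\operatorname{dom}\phi)\neq\emptyset$, continuous on $\operatorname{dom}\phi$, continuously differentiable on $\operatorname{int}(\operatorname{dom}\phi)$; its distance is $d(x,y)=\phi(x)-\phi(y)-\langle\nabla\phi(y),x-y\rangle$ on $\operatorname{dom}\phi\times\operatorname{int}(\operatorname{dom}\phi)$, and $\mathrm{prox}^\phi_F(y,a)=\operatorname{argmin}_x\big(F(x)+\langle a,x\rangle+d(x,y)\big)$, assumed for every $a$ and $y\in\operatorname{int}(\operatorname{dom}\phi)$ to be a unique point of $\operatorname{int}(\operatorname{dom}\phi)$. Kernels $\phi_{\mathrm p}$ on $\mathbb R^n$, $\phi_{\mathrm d}$ on $\mathbb R^m$ have distances $d_{\mathrm p},d_{\mathrm d}$ with $d_{\mathrm p}(x,x')\ge\frac12\|x-x'\|_{\mathrm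 p}^2$, $d_{\mathrm d}(z,z')\ge\frac12\|z-z'\|_{\mathrm d}^2$ for norms $\|\cdot\|_{\mathrm p},\|\cdot\|_{\mathrm d}$. Also $\operatorname{dom}\phi_{\mathrm p}\subseteq\operatorname{dom}h$ and $h(x)-h(x')-\langle\nabla h(x'),x-x'\rangle\le L\,d_{\mathrm p}(x,x')$ for all $(x,x')\in\operatorname{dom}d_{\mathrm p}$, for some $L>0$. $\|A\|=\sup_{u\ne0,v\ne0}\langle v,Au\rangle/(\|v\|_{\mathrm d}\|u\|_{\mathrm p})$. The optimality conditions $0\in\partial f(x)+\nabla h(x)+A^Tz$, $0\in\partial g^*(z)-Ax$ have a solution $(x^\star,z^\star)\in\operatorname{dom}\phi_{\mathrm p}\times\operatorname{dom}\phi_{\mathrm d}$. *)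

(* Defs.v *)
(* Vectors of R^n are column
   vectors 'cV[R]_n over an abstract R : realType; functions with values in
   R \cup {+oo} are functions into \bar R together with the hypothesis that
   they never take the value -oo. *)
From HB Require Import structures.
From mathcomp Require Import all_boot all_order all_algebra.
From mathcomp Require Import all_classical all_reals all_analysis.
Set Implicit Arguments. Unset Strict Implicit. Unset Printing Implicit Defensive.
Import Order.TTheory GRing.Theory Num.Theory.
Import numFieldNormedType.Exports.
Local Open Scope classical_set_scope.
Local Open Scope ring_scope.

Section Defs.
Variable R : realType.

Definition dot (n : nat) (u v : 'cV[R]_n) : R := \sum_(i < n) u i 0 * v i 0.

Definition edom (n : nat) (F : 'cV[R]_n -> \bar R) : set 'cV[R]_n :=
  [set x | (F x < +oo)%E].

Definition no_minf (n : nat) (F : 'cV[R]_n -> \bar R) := forall x, F x != -oo%E.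

Definition proper_fun (n : nat) (F : 'cV[R]_n -> \bar R) :=
  no_minf F /\ exists x, (F x < +oo)%E.

Definition convex_fun (n : nat) (F : 'cV[R]_n -> \bar R) :=
  forall (x y : 'cV[R]_n) (t : R), 0 < t < 1 ->
    (F (t *: x + (1 - t) *: y)%R <= t%:E * F x + (1 - t)%:E * F y)%E.

Definition closed_fun (n : nat) (F : 'cV[R]_n -> \bar R) :=
  closed [set p : 'cV[R]_n * R | (F p.1 <= p.2%:E)%E].

(* real-valued version of F (meaningful on its domain) *)
Definition rfun (n : nat) (F : 'cV[R]_n -> \bar R) : 'cV[R]_n -> R :=
  fun x => fine (F x).

Definition grad (n : nat) (F : 'cV[R]_n -> R) (x : 'cV[R]_n) : 'cV[R]_n :=
  \col_(i < n) ('d F x (delta_mx i 0 : 'cV[R]_n)).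

Definition diff_at (n : nat) (F : 'cV[R]_n -> R) (x : 'cV[R]_n) :=
  differentiable F x.

Definition conj_fun (m : nat) (g : 'cV[R]_m -> \bar R) : 'cV[R]_m -> \bar R :=
  fun z => ereal_sup [set ((dot z y)%:E - g y)%E | y in [set: 'cV[R]_m]].

Definition bregman_kernel (n : nat) (phi : 'cV[R]_n -> \bar R) :=
  [/\ no_minf phi, convex_fun phi, interior (edom phi) !=set0 &
      [/\
      {within edom phi, continuous (rfun phi)},
      (forall y, interior (edom phi) y -> diff_at (rfun phi) y) &
      (forall y, interior (edom phi) y -> {for y, continuous (grad (rfun phi))})]].

(* Bregman distance d(x,y), defined on dom phi x int dom phi; it is +oo when
   x is outside dom phi (so that prox minimizes over dom phi). *)
Definition breg (n : nat) (phi : 'cV[R]_n -> \bar R) (x y : 'cV[R]_n) : \bar R :=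
  if (phi x < +oo)%E
  then (phi x - phi y - (dot (grad (rfun phi) y) (x - y)%R)%:E)%E
  else +oo%E.

(* x is a minimizer of  x' |-> F(x') + <a,x'> + d(x',y),
   i.e. x is in prox^phi_F(y,a) *)
Definition is_prox (n : nat) (phi F : 'cV[R]_n -> \bar R) (y a x : 'cV[R]_n) :=
  forall x', (F x + (dot a x)%:E + breg phi x y <=
              F x' + (dot a x')%:E + breg phi x' y)%E.

Definition prox_well_defined (n : nat) (phi F : 'cV[R]_n -> \bar R) :=
  forall a y, interior (edom phi) y ->
    exists x, [/\ interior (edom phi) x, is_prox phi F y a x &
                  forall x', is_prox phi F y a x' -> x' = x].

Definition is_norm (n : nat) (N : 'cV[R]_n -> R) :=
  [/\ forall x y, N (x + y) <= N x + N y,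
      forall (a : R) x, N (a *: x) = `|a| * N x &
      forall x, N x = 0 -> x = 0].

Definition op_norm (m n : nat) (np : 'cV[R]_n -> R) (nd : 'cV[R]_m -> R)
  (A : 'M[R]_(m, n)) : R :=
  sup [set r : R | exists (u : 'cV[R]_n) (v : 'cV[R]_m),
        [/\ u != 0, v != 0 & r = dot v (A *m u) / (nd v * np u)]].

Definition subgrad (n : nat) (F : 'cV[R]_n -> \bar R) (x s : 'cV[R]_n) :=
  (F x < +oo)%E /\ forall y, (F x + (dot s (y - x))%:E <= F y)%E.

Definition lagr (m n : nat) (f h : 'cV[R]_n -> \bar R) (gs : 'cV[R]_m -> \bar R)
  (A : 'M[R]_(m, n)) (x : 'cV[R]_n) (z : 'cV[R]_m) : \bar R :=
  if ~~ (f x + h x < +oo)%E then +oo%E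
  else if ~~ (gs z < +oo)%E then -oo%E
  else (f x + h x + (dot z (A *m x))%:E - gs z)%E.

Definition avg (n : nat) (xs : nat -> 'cV[R]_n) (k : nat) : 'cV[R]_n :=
  k%:R^-1 *: \sum_(1 <= i < k.+1) xs i.

Definition primal_CV (m n : nat) (phip : 'cV[R]_n -> \bar R)
  (phid : 'cV[R]_m -> \bar R) (f h : 'cV[R]_n -> \bar R)
  (gs : 'cV[R]_m -> \bar R) (A : 'M[R]_(m, n)) (sigma tau : R)
  (xs : nat -> 'cV[R]_n) (zs : nat -> 'cV[R]_m) :=
  forall k,
    is_prox phip (fun x => tau%:E * f x)%E (xs k)
      (tau *: (A^T *m zs k) + tau *: grad (rfun h) (xs k)) (xs k.+1) /\
    is_prox phid (fun z => sigma%:E * gs z)%E (zs k)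
      (- sigma *: (A *m (2%:R *: xs k.+1 - xs k))) (zs k.+1).

Definition dual_CV (m n : nat) (phip : 'cV[R]_n -> \bar R)
  (phid : 'cV[R]_m -> \bar R) (f h : 'cV[R]_n -> \bar R)
  (gs : 'cV[R]_m -> \bar R) (A : 'M[R]_(m, n)) (sigma tau : R)
  (xs : nat -> 'cV[R]_n) (zs : nat -> 'cV[R]_m) :=
  forall k,
    is_prox phid (fun z => sigma%:E * gs z)%E (zs k)
      (- sigma *: (A *m xs k)) (zs k.+1) /\
    is_prox phip (fun x => tau%:E * f x)%E (xs k)
      (tau *: (A^T *m (2%:R *: zs k.+1 - zs k)) + tau *: grad (rfun h) (xs k))
      (xs k.+1).

End Defs.

(* Main.v *)
Require Import Defs.
From HB Require Import structures.
From mathcomp Require Import all_boot all_order all_algebra.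
From mathcomp Require Import all_classical all_reals all_analysis.
From mathcomp Require Import ring lra.
Import Order.TTheory GRing.Theory Num.Theory.
Import numFieldNormedType.Exports.
Local Open Scope classical_set_scope.
Local Open Scope ring_scope.
Section DotLemmas.
Variable R : realType.
Set Implicit Arguments. Unset Strict Implicit.

Lemma dotE n (u v : 'cV[R]_n) : dot u v = (u^T *m v) 0 0.
Proof. by rewrite /dot !mxE; apply: eq_bigr => i _; rewrite mxE. Qed.

Lemma dotC n (u v : 'cV[R]_n) : dot u v = dot v u.
Proof. by rewrite /dot; apply: eq_bigr => i _; rewrite mulrC. Qed.

Lemma dotDl n (u v w : 'cV[R]_n) : dot (u + v) w = dot u w + dot v w.
Proof. by rewrite !dotE linearD /= mulmxDl mxE. Qed.

Lemma dotZl n a (u w : 'cV[R]_n) : dot (a *: u) w = a * dot u w.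
Proof. by rewrite !dotE linearZ /= -scalemxAl mxE. Qed.

Lemma dotNl n (u w : 'cV[R]_n) : dot (- u) w = - dot u w.
Proof. by rewrite -scaleN1r dotZl mulN1r. Qed.

Lemma dotBl n (u v w : 'cV[R]_n) : dot (u - v) w = dot u w - dot v w.
Proof. by rewrite dotDl dotNl. Qed.

Lemma dotDr n (u v w : 'cV[R]_n) : dot w (u + v) = dot w u + dot w v.
Proof. by rewrite dotC dotDl !(dotC w). Qed.

Lemma dotZr n a (u w : 'cV[R]_n) : dot w (a *: u) = a * dot w u.
Proof. by rewrite dotC dotZl dotC. Qed.

Lemma dotNr n (u w : 'cV[R]_n) : dot w (- u) = - dot w u.
Proof. by rewrite dotC dotNl dotC. Qed.

Lemma dotBr n (u v w : 'cV[R]_n) : dot w (u - v) = dot w u - dot w v.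
Proof. by rewrite dotDr dotNr. Qed.

Lemma dot0l n (w : 'cV[R]_n) : dot 0 w = 0.
Proof. by rewrite -(scale0r (0 : 'cV[R]_n)) dotZl mul0r. Qed.

Lemma dot0r n (w : 'cV[R]_n) : dot w 0 = 0.
Proof. by rewrite dotC dot0l. Qed.

Lemma dot_trmx m n (A : 'M[R]_(m, n)) (z : 'cV[R]_m) (u : 'cV[R]_n) :
  dot (A^T *m z) u = dot z (A *m u).
Proof. by rewrite !dotE trmx_mul trmxK mulmxA. Qed.

Definition Bf m n (A : 'M[R]_(m, n)) (u : 'cV[R]_n) (w : 'cV[R]_m) := dot w (A *m u).

Lemma BfDl m n (A : 'M[R]_(m, n)) u v w : Bf A (u + v) w = Bf A u w + Bf A v w.
Proof. by rewrite /Bf mulmxDr dotDr. Qed.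
Lemma BfNl m n (A : 'M[R]_(m, n)) u w : Bf A (- u) w = - Bf A u w.
Proof. by rewrite /Bf mulmxN dotNr. Qed.
Lemma BfBl m n (A : 'M[R]_(m, n)) u v w : Bf A (u - v) w = Bf A u w - Bf A v w.
Proof. by rewrite BfDl BfNl. Qed.
Lemma BfZl m n (A : 'M[R]_(m, n)) a u w : Bf A (a *: u) w = a * Bf A u w.
Proof. by rewrite /Bf -scalemxAr dotZr. Qed.
Lemma BfDr m n (A : 'M[R]_(m, n)) u v w : Bf A u (v + w) = Bf A u v + Bf A u w.
Proof. by rewrite /Bf dotDl. Qed.
Lemma BfNr m n (A : 'M[R]_(m, n)) u w : Bf A u (- w) = - Bf A u w.
Proof. by rewrite /Bf dotNl. Qed.
Lemma BfBr m n (A : 'M[R]_(m, n)) u v w : Bf A u (v - w) = Bf A u v - Bf A u w.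
Proof. by rewrite BfDr BfNr. Qed.
Lemma BfZr m n (A : 'M[R]_(m, n)) a u w : Bf A u (a *: w) = a * Bf A u w.
Proof. by rewrite /Bf dotZl. Qed.

End DotLemmas.
Section NormLemmas.
Variable R : realType.
Set Implicit Arguments. Unset Strict Implicit.

Lemma isn0 n (N : 'cV[R]_n -> R) : is_norm N -> N 0 = 0.
Proof. by case=> _ hZ _; rewrite -(scale0r (0 : 'cV[R]_n)) hZ normr0 mul0r. Qed.

Lemma isnN n (N : 'cV[R]_n -> R) x : is_norm N -> N (- x) = N x.
Proof. by case=> _ hZ _; rewrite -scaleN1r hZ normrN normr1 mul1r. Qed.

Lemma isnB n (N : 'cV[R]_n -> R) x y : is_norm N -> N (x - y) = N (y - x).
Proof. by move=> hN; rewrite -isnN // opprB. Qed.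

Lemma isn_ge0 n (N : 'cV[R]_n -> R) x : is_norm N -> 0 <= N x.
Proof.
move=> hN; have := hN; case=> hT _ _.
have := hT x (- x); rewrite subrr isn0 // isnN //.
move=> h; lra.
Qed.

Lemma isn_gt0 n (N : 'cV[R]_n -> R) x : is_norm N -> x != 0 -> 0 < N x.
Proof.
move=> hN hx; rewrite lt_neqAle isn_ge0 // andbT; apply/eqP => h.
have [_ _ h0] := hN; move: hx; rewrite (h0 x) ?eqxx //.
Qed.

Lemma entry_le_norm p q (u : 'M[R]_(p, q)) i j : `|u i j| <= `|u|.
Proof.
rewrite [leRHS]/Num.norm /= mx_normrE; apply/bigmax_geP; right => /=.
by exists (i, j).
Qed.

Lemma cV_sum_delta n (u : 'cV[R]_n) : u = \sum_i u i 0 *: delta_mx i 0.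
Proof.
apply: (etrans (matrix_sum_delta u)); apply: eq_bigr => i _.
by rewrite big_ord1.
Qed.

Lemma isn_sum n (N : 'cV[R]_n -> R) I r (P : pred I) (F : I -> 'cV[R]_n) :
  is_norm N -> N (\sum_(i <- r | P i) F i) <= \sum_(i <- r | P i) N (F i).
Proof.
move=> hN; elim/big_rec2: _ => [|i y x _ hy]; first by rewrite isn0.
have [hT _ _] := hN; apply: le_trans (hT _ _) _; exact: lerD.
Qed.

Lemma isn_upper n (N : 'cV[R]_n -> R) : is_norm N ->
  forall r : 'rV[R]_n, N r^T <= `|r| * \sum_i N (delta_mx i 0).
Proof.
move=> hN r; rewrite (cV_sum_delta r^T) mulr_sumr.
apply: le_trans (isn_sum _ _ _ hN) _; apply: ler_sum => i _.
have [_ hZ _] := hN; rewrite hZ ler_wpM2r ?isn_ge0 //.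
by rewrite mxE entry_le_norm.
Qed.

Lemma isn_cont n (N : 'cV[R]_n -> R) : is_norm N ->
  continuous (fun r : 'rV[R]_n => N r^T).
Proof.
move=> hN x; set C := \sum_i N (delta_mx i 0 : 'cV[R]_n).
have C0 : 0 <= C by apply: sumr_ge0 => i _; apply: isn_ge0.
apply/(@cvgrPdist_lt _ _ _ (nbhs x)) => e e0.
have e1 : 0 < e / (C + 1) by apply: divr_gt0 => //; lra.
near=> y.
have hT : forall a b : 'cV[R]_n, N (a + b) <= N a + N b by case: hN.
have h1 := hT (x^T - y^T) y^T; rewrite subrK in h1.
have h2 := hT (y^T - x^T) x^T; rewrite subrK in h2.
have h3 : N (x^T - y^T) <= `|x - y| * C by rewrite -linearB; apply: isn_upper.
have h4 : N (y^T - x^T) = N (x^T - y^T) by apply: isnB.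
have h5 : `|x - y| < e / (C + 1).
  by near: y; apply: cvgr_dist_lt => //; exact: cvg_id.
have h6 : `|x - y| * C <= e / (C + 1) * C by apply: ler_wpM2r => //; exact: ltW.
have h7 : e / (C + 1) * C < e.
  rewrite mulrAC ltr_pdivrMr; last lra.
  nra.
rewrite ltr_norml; apply/andP; split; lra.
Unshelve. all: by end_near.
Qed.

Lemma isn_lower n (N : 'cV[R]_n -> R) : is_norm N ->
  exists2 c, 0 < c & forall r : 'rV[R]_n, c * `|r| <= N r^T.
Proof.
move=> hN.
pose S := [set r : 'rV[R]_n | `|r| = 1].
have [[r0 Sr0]|S0] := pselect (S !=set0); last first.
  exists 1 => // r; have [->|rn0] := eqVneq r 0.
    by rewrite normr0 mulr0 isn_ge0.
  exfalso; apply: S0; exists (`|r|^-1 *: r); rewrite /S /= normrZ.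
  by rewrite normrV ?unitfE ?normr_eq0 // normr_id mulVf // normr_eq0.
have cS : compact S.
  apply: bounded_closed_compact.
    exists 1; split; first by rewrite realE ler01.
    move=> M M1 r; rewrite /S /= => ->; exact: ltW.
  have -> : S = Num.norm @^-1` [set 1] by [].
  apply: closed_comp; last exact: closed_eq.
  by move=> r _; exact: norm_continuous.
have [c Sc cmin] := compact_EVT_min (ex_intro _ r0 Sr0) cS
   (continuous_subspaceT (isn_cont hN)).
have Sc' : S c by rewrite inE in Sc.
have cn0 : c != 0 by apply/eqP => c0; move: Sc'; rewrite /S /= c0 normr0; lra.
exists (N c^T).
  apply: isn_gt0 => //; apply: contra cn0 => /eqP h.
  by rewrite -(trmxK c) h linear0.
move=> r; have [->|rn0] := eqVneq r 0.
  by rewrite normr0 mulr0 isn_ge0.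
have nr0 : 0 < `|r| by rewrite normr_gt0.
have Sr : S (`|r|^-1 *: r).
  rewrite /S /= normrZ normrV ?unitfE ?normr_eq0 // normr_id mulVf //.
  by rewrite normr_eq0.
have := cmin _ (mem_set Sr); rewrite linearZ /=.
have [_ hZ _] := hN; rewrite hZ normrV ?unitfE ?normr_eq0 // normr_id.
rewrite ler_pdivlMl // => h; rewrite mulrC; exact: h.
Qed.

End NormLemmas.
Section OpNorm.
Variable R : realType.
Set Implicit Arguments. Unset Strict Implicit.

Lemma dot_abs_bound m n (A : 'M[R]_(m, n)) (u : 'cV[R]_n) (v : 'cV[R]_m) :
  dot v (A *m u) <= (\sum_i \sum_j `|A i j|) * (`|v^T| * `|u^T|).
Proof.
rewrite /dot mulr_suml; apply: le_trans (ler_norm _) _.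
apply: le_trans (ler_norm_sum _ _ _) _; apply: ler_sum => i _.
rewrite normrM mxE.
set a := `|v^T|; set b := `|u^T|.
have h1 : `|v i 0| <= a by have := entry_le_norm v^T 0 i; rewrite mxE.
have h2 : `|\sum_j A i j * u j 0| <= (\sum_j `|A i j|) * b.
  apply: le_trans (ler_norm_sum _ _ _) _; rewrite mulr_suml; apply: ler_sum => j _.
  rewrite normrM; apply: ler_wpM2l => //.
  by have := entry_le_norm u^T 0 j; rewrite mxE.
have := normr_ge0 (v i 0); have := normr_ge0 (\sum_j A i j * u j 0).
have : 0 <= \sum_j `|A i j| by apply: sumr_ge0.
have : 0 <= b by apply: normr_ge0.
move=> b0 S0 c0 d0.
rewrite mulrA [_ * a]mulrC -mulrA.
apply: ler_pM => //.
Qed.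

Lemma opnorm_bound m n (np : 'cV[R]_n -> R) (nd : 'cV[R]_m -> R) (A : 'M[R]_(m, n)) :
  is_norm np -> is_norm nd ->
  forall u v, dot v (A *m u) <= op_norm np nd A * (nd v * np u).
Proof.
move=> hp hd u v.
have [->|un0] := eqVneq u 0.
  by rewrite mulmx0 dot0r isn0 // !mulr0.
have [->|vn0] := eqVneq v 0.
  by rewrite dot0l isn0 // mul0r mulr0.
have [cp cp0 hcp] := isn_lower hp.
have [cd cd0 hcd] := isn_lower hd.
set SA := \sum_i \sum_j `|A i j|.
have SA0 : 0 <= SA by apply: sumr_ge0 => i _; apply: sumr_ge0 => j _.
set E := [set r : R | exists (u : 'cV[R]_n) (v : 'cV[R]_m),
        [/\ u != 0, v != 0 & r = dot v (A *m u) / (nd v * np u)]].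
have key : forall u v, u != 0 -> v != 0 ->
    dot v (A *m u) / (nd v * np u) <= SA / (cp * cd).
  move=> u' v' un0' vn0'.
  have pu := isn_gt0 hp un0'; have pv := isn_gt0 hd vn0'.
  rewrite ler_pdivrMr ?mulr_gt0 //.
  apply: le_trans (dot_abs_bound A u' v') _.
  have hu := hcp u'^T; rewrite trmxK in hu.
  have hv := hcd v'^T; rewrite trmxK in hv.
  have a0 := normr_ge0 v'^T; have b0 := normr_ge0 u'^T.
  set a := `|v'^T| in hv a0 *; set b := `|u'^T| in hu b0 *.
  have -> : SA / (cp * cd) * (nd v' * np u') = SA * ((nd v' / cd) * (np u' / cp)).
    by field; apply/andP; split; apply: lt0r_neq0.
  apply: ler_wpM2l => //; apply: ler_pM => //.
    by rewrite ler_pdivlMr // mulrC.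
  by rewrite ler_pdivlMr // mulrC.
have hs : has_sup E.
  split; first by exists (dot v (A *m u) / (nd v * np u)); exists u, v.
  exists (SA / (cp * cd)) => r [u' [v' [hu hv ->]]]; exact: key.
have := sup_upper_bound hs (ex_intro _ u (ex_intro _ v (And3 un0 vn0 erefl))).
rewrite -/(op_norm np nd A) ler_pdivrMr ?mulr_gt0 ?isn_gt0 //.
Qed.

End OpNorm.
Section DiffLemmas.
Variable R : realType.
Set Implicit Arguments. Unset Strict Implicit.

Lemma grad_dot n (F : 'cV[R]_n -> R) x v :
  dot (grad F x) v = 'd F x v.
Proof.
rewrite [in RHS](cV_sum_delta v) linear_sum /dot; apply: eq_bigr => i _.
by rewrite linearZ /= mxE mulrC.
Qed.

Lemma deriv_right n (F : 'cV[R]_n -> R) x v :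
  differentiable F x ->
  (fun t : R => t^-1 * (F (t *: v + x) - F x)) @ 0^'+ --> 'd F x v.
Proof.
move=> dF; rewrite -deriveE //.
have hd := @diff_derivable _ _ _ F x v dF.
have hq : (fun t : R => t^-1 *: ((F \o shift x) (t *: v) - F x)) @ 0^' --> 'D_v F x.
  exact: hd.
move=> A /hq /nbhs_ballP [_ /posnumP[e] xe_A].
exists e%:num => //= y xe_y; rewrite lt_def => /andP [xney _]; exact: xe_A.
Qed.

Lemma diff_lower n (F : 'cV[R]_n -> R) x v c :
  differentiable F x ->
  (forall t, 0 < t < 1 -> t * c <= F (x + t *: v) - F x) -> c <= 'd F x v.
Proof.
move=> dF H; apply: (@cvgr_to_ge _ _ _ _ _ _ c (@deriv_right n F x v dF)).
near=> t.
have t0 : 0 < t by near: t; exact: nbhs_right_gt.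
have t1 : t < 1 by near: t; exact: nbhs_right_lt.
rewrite ler_pdivlMl // [t *: v + x]addrC; apply: H; rewrite t0 t1.
Unshelve. all: by end_near.
Qed.

Lemma diff_upper n (F : 'cV[R]_n -> R) x v c :
  differentiable F x ->
  (forall t, 0 < t < 1 -> F (x + t *: v) - F x <= t * c) -> 'd F x v <= c.
Proof.
move=> dF H; apply: (@cvgr_to_le _ _ _ _ _ _ c (@deriv_right n F x v dF)).
near=> t.
have t0 : 0 < t by near: t; exact: nbhs_right_gt.
have t1 : t < 1 by near: t; exact: nbhs_right_lt.
rewrite ler_pdivrMl // [t *: v + x]addrC; apply: H; rewrite t0 t1.
Unshelve. all: by end_near.
Qed.

End DiffLemmas.
Section ProxLemmas.
Variable R : realType.
Set Implicit Arguments. Unset Strict Implicit.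
Local Open Scope ereal_scope.

Lemma finE n (F : 'cV[R]_n -> \bar R) x :
  no_minf F -> F x < +oo -> F x = (fine (F x))%:E.
Proof. by move=> hF hx; rewrite fineK // fin_numE hF -ltey hx. Qed.

Definition Dr n (phi : 'cV[R]_n -> \bar R) (x y : 'cV[R]_n) : R :=
  (rfun phi x - rfun phi y - dot (grad (rfun phi) y) (x - y))%R.

Lemma breg_fin n (phi : 'cV[R]_n -> \bar R) x y :
  no_minf phi -> phi x < +oo -> phi y < +oo -> breg phi x y = (Dr phi x y)%:E.
Proof.
move=> hn hx hy; rewrite /breg hx /Dr /rfun.
by rewrite (finE hn hx) (finE hn hy) /= -!EFinD.
Qed.

Lemma convex_comb n (x xp : 'cV[R]_n) (t : R) :
  (xp + t *: (x - xp) = t *: x + (1 - t) *: xp)%R.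
Proof. by apply/matrixP => i j; rewrite !mxE; ring. Qed.

Lemma fin_lt n (F : 'cV[R]_n -> \bar R) x (r : R) : F x <= r%:E -> F x < +oo.
Proof. by move=> h; apply: le_lt_trans h _; exact: ltry. Qed.

Definition convex_fin n (F : 'cV[R]_n -> \bar R) :=
  forall x y (t : R), (0 < t < 1)%R -> F x < +oo -> F y < +oo ->
    F (t *: x + (1 - t) *: y)%R <= (t * fine (F x) + (1 - t) * fine (F y))%:E.

Lemma convex_finW n (F : 'cV[R]_n -> \bar R) :
  no_minf F -> convex_fun F -> convex_fin F.
Proof.
move=> Fn Fc x y t t01 Fx Fy; have := Fc x y t t01.
by rewrite (finE Fn Fx) (finE Fn Fy) -!EFinM -EFinD /= .
Qed.

Lemma scale_lt n (F : 'cV[R]_n -> \bar R) (c : R) u : (0 < c)%R -> no_minf F ->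
  (c%:E * F u < +oo) = (F u < +oo).
Proof.
move=> c0 Fn; have := Fn u; case: (F u) => [r| |] //= _.
- by rewrite -EFinM !ltry.
- by rewrite gt0_muley // ltxx.
Qed.

Lemma scale_fine n (F : 'cV[R]_n -> \bar R) (c : R) u : no_minf F -> F u < +oo ->
  fine (c%:E * F u) = (c * fine (F u))%R.
Proof. by move=> Fn Fu; rewrite (finE Fn Fu) -EFinM. Qed.

Lemma scale_no_minf n (F : 'cV[R]_n -> \bar R) (c : R) : (0 < c)%R -> no_minf F ->
  no_minf (fun u => c%:E * F u).
Proof.
move=> c0 Fn u; have := Fn u; case: (F u) => [r| |] //= _.
by rewrite gt0_muley.
Qed.

Lemma scale_convex_fin n (F : 'cV[R]_n -> \bar R) (c : R) : (0 < c)%R -> no_minf F ->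
  convex_fin F -> convex_fin (fun u => c%:E * F u).
Proof.
move=> c0 Fn Fc x y t t01 /=; rewrite !scale_lt // => Fx Fy.
rewrite !scale_fine //.
have := lee_wpmul2l (ltW (c0 : (0 < c%:E))) (Fc x y t t01 Fx Fy).
rewrite -EFinM => h; apply: le_trans h _; rewrite lee_fin le_eqVlt; apply/orP; left.
apply/eqP; ring.
Qed.

Lemma arith1 (t fp fx ax axp gx gxp gyy pxp py fxt pxt : R) :
  (fp + axp + (pxp - py - (gxp - gyy)) <=
     fxt + (axp + t * (ax - axp)) + (pxt - py - (gxp + t * (gx - gxp) - gyy)))%R ->
  (fxt <= t * fx + (1 - t) * fp)%R ->
  (t * (fp - fx - (ax - axp) + (gx - gxp)) <= pxt - pxp)%R.
Proof. move=> h1 h2; lra. Qed.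

Lemma arith2 (fp fx ax axp gx gxp gyy gpx gpxp px pxp py : R) :
 (fp - fx - (ax - axp) + (gx - gxp) <= gpx - gpxp)%R ->
 (fp + axp + (pxp - py - (gxp - gyy)) + (px - pxp - (gpx - gpxp)) <=
   fx + ax + (px - py - (gx - gyy)))%R.
Proof. move=> h; lra. Qed.

Lemma prox_ineq n (phi F : 'cV[R]_n -> \bar R) (y a xp x : 'cV[R]_n) :
  no_minf phi -> convex_fun phi -> no_minf F -> convex_fin F ->
  phi y < +oo -> phi xp < +oo -> differentiable (rfun phi) xp ->
  is_prox phi F y a xp -> phi x < +oo -> F x < +oo ->
  F xp < +oo /\
  (fine (F xp) + dot a xp + Dr phi xp y + Dr phi x xp <=
   fine (F x) + dot a x + Dr phi x y)%R.
Proof.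
move=> pn pc Fn Fc py pxp dphi hp px Fx.
have hx := hp x.
rewrite (breg_fin pn pxp py) (breg_fin pn px py) in hx.
have Fxp : F xp < +oo.
  rewrite ltey; apply/eqP => Hinf; move: hx.
  rewrite Hinf (finE Fn Fx) -!EFinD addye // addye //.
split => //.
set fp := fine (F xp); set fx := fine (F x).
have hfp : F xp = fp%:E by apply: finE.
have hfx : F x = fx%:E by apply: finE.
set v := (x - xp)%R.
set Phi := rfun phi.
set gy := grad Phi y.
set c := (fp - fx - (dot a x - dot a xp) + (dot gy x - dot gy xp))%R.
have key : (c <= 'd Phi xp v)%R.
  apply: diff_lower => // t /andP [t0 t1].
  set xt := (xp + t *: v)%R.
  have ext : xt = (t *: x + (1 - t) *: xp)%R by apply: convex_comb.
  have t01 : (0 < t < 1)%R by rewrite t0 t1.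
  have hphi := pc x xp t t01; rewrite -ext in hphi.
  have hF := Fc x xp t t01 Fx Fxp; rewrite -ext in hF.
  rewrite (finE pn px) (finE pn pxp) -!EFinM -EFinD in hphi.
  have phixt := fin_lt hphi.
  have Fxt := fin_lt hF.
  have hxt := hp xt.
  rewrite (breg_fin pn pxp py) (breg_fin pn phixt py) hfp (finE Fn Fxt) in hxt.
  rewrite -!EFinD lee_fin in hxt.
  rewrite (finE Fn Fxt) lee_fin in hF.
  move: hxt hF; rewrite /Dr -/Phi -/gy.
  rewrite /xt /v !dotBr !dotDr !dotZr !dotBr.
  move=> h1 h2; rewrite /c; exact: (arith1 h1 h2).
have hk : (c <= dot (grad Phi xp) v)%R by rewrite grad_dot.
set gp := grad Phi xp.
have e1 : Dr phi xp y = (Phi xp - Phi y - (dot gy xp - dot gy y))%R.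
  by rewrite /Dr dotBr.
have e2 : Dr phi x xp = (Phi x - Phi xp - (dot gp x - dot gp xp))%R.
  by rewrite /Dr dotBr.
have e3 : Dr phi x y = (Phi x - Phi y - (dot gy x - dot gy y))%R.
  by rewrite /Dr dotBr.
rewrite e1 e2 e3.
apply: (@arith2 fp fx (dot a x) (dot a xp) (dot gy x) (dot gy xp) (dot gy y) (dot gp x) (dot gp xp) (Phi x) (Phi xp) (Phi y)).
have hk2 : (c <= dot gp x - dot gp xp)%R by rewrite -dotBr.
exact: hk2.
Qed.

End ProxLemmas.
Section Jensen.
Variable R : realType.
Set Implicit Arguments. Unset Strict Implicit.
Lemma avg1 n (xs : nat -> 'cV[R]_n) : avg xs 1 = xs 1%N.
Proof. by rewrite /avg big_nat1 invr1 scale1r. Qed.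

Lemma avgS n (xs : nat -> 'cV[R]_n) k : (0 < k)%N ->
  avg xs k.+1 = (k.+1%:R)^-1 *: xs k.+1 + (1 - (k.+1%:R)^-1) *: avg xs k.
Proof.
move=> k0; rewrite /avg big_nat_recr //= scalerA scalerDr addrC; congr (_ + _).
congr (_ *: _).
have kn0 : (k%:R != 0 :> R) by rewrite pnatr_eq0 -lt0n.
have kn1 : (k.+1%:R != 0 :> R) by rewrite pnatr_eq0.
have kn1' : (k%:R + 1 != 0 :> R) by rewrite natr1.
by rewrite -natr1; field; rewrite kn0 kn1'.
Qed.

Local Open Scope ereal_scope.

Lemma jensen n (F : 'cV[R]_n -> \bar R) (xs : nat -> 'cV[R]_n) (r : nat -> R) :
  convex_fun F -> (forall i, (0 < i)%N -> F (xs i) <= (r i)%:E) ->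
  forall k, (1 <= k)%N ->
  F (avg xs k) <= ((k%:R)^-1 * \sum_(1 <= i < k.+1) r i)%:E.
Proof.
move=> Fc hr; elim => [//|k IH] _.
have [->|k0] := eqVneq k 0%N.
  by rewrite avg1 big_nat1 invr1 mul1r; apply: hr.
have k0' : (0 < k)%N by rewrite lt0n.
rewrite avgS //.
set t := ((k.+1%:R)^-1)%R.
have t0 : (0 < t)%R by rewrite invr_gt0 ltr0n.
have t1 : (t < 1)%R by rewrite invf_lt1 ?ltr0n // ltr1n ltnS.
apply: le_trans (Fc _ _ _ _) _; first by rewrite t0 t1.
have e1 := lee_wpmul2l (ltW t0 : (0 <= t%:E)) (hr k.+1 isT).
have t1' : (0 <= (1 - t)%:E) by rewrite lee_fin subr_ge0 ltW.
have e2 := lee_wpmul2l t1' (IH k0').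
apply: le_trans (leeD e1 e2) _.
rewrite -!EFinM -EFinD lee_fin (@big_nat_recr _ _ _ k.+1 1%N) //=.
have kn0 : (k%:R != 0 :> R)%R by rewrite pnatr_eq0 -lt0n.
have kn1' : (k%:R + 1 != 0 :> R)%R by rewrite natr1 pnatr_eq0.
rewrite le_eqVlt; apply/orP; left; apply/eqP; rewrite /t -natr1.
by field; rewrite kn0 kn1'.
Qed.

Lemma conj_no_minf m (g : 'cV[R]_m -> \bar R) :
  no_minf g -> (exists y, g y < +oo) -> no_minf (conj_fun g).
Proof.
move=> gn [y gy] z.
have hy : ((dot z y)%:E - g y) <= conj_fun g z.
  by apply: ereal_sup_ubound; exists y.
apply/negP => /eqP h; rewrite h in hy.
move: hy; rewrite leeNy_eq (finE gn gy) -EFinB.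
by [].
Qed.

Lemma conj_convex m (g : 'cV[R]_m -> \bar R) :
  no_minf g -> convex_fun (conj_fun g).
Proof.
move=> gn z1 z2 t /andP [t0 t1].
apply: ub_ereal_sup => _ [y _ <-].
have [gy|] := ltP (g y) +oo; last first.
  rewrite leye_eq => /eqP ->.
  by rewrite /= ?addeNy ?leNye.
rewrite (finE gn gy).
set r := fine (g y).
have h1 : ((dot z1 y - r)%:E <= conj_fun g z1).
  by apply: ereal_sup_ubound; exists y => //; rewrite (finE gn gy).
have h2 : ((dot z2 y - r)%:E <= conj_fun g z2).
  by apply: ereal_sup_ubound; exists y => //; rewrite (finE gn gy).
have e1 := lee_wpmul2l (ltW t0 : (0 <= t%:E)) h1.
have t1' : (0 <= (1 - t)%:E) by rewrite lee_fin subr_ge0 ltW.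
have e2 := lee_wpmul2l t1' h2.
apply: le_trans (leeD e1 e2).
rewrite -!EFinM -EFinD -EFinD lee_fin le_eqVlt; apply/orP; left; apply/eqP.
rewrite dotDl !dotZl; ring.
Qed.

End Jensen.
Section Steps.
Variable R : realType.
Set Implicit Arguments. Unset Strict Implicit.

Lemma arith3 (a b c t : R) : a <= t * b + (1 - t) * c -> a - c <= t * (b - c).
Proof. move=> h; lra. Qed.

Lemma arith4 (hi g hx : R) : g <= hx - hi -> hi + g <= hx.
Proof. move=> h; lra. Qed.

Lemma div_step (c a b D : R) : 0 < c -> c * a <= c * b + D -> a <= b + c^-1 * D.
Proof.
move=> c0 h.
have e : b + c^-1 * D - a = c^-1 * (c * b + D - c * a).
  by field; apply: lt0r_neq0.
rewrite -subr_ge0 e; apply: mulr_ge0; first by rewrite invr_ge0 ltW.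
by rewrite subr_ge0.
Qed.

Local Open Scope ereal_scope.

Lemma grad_ineq n (h : 'cV[R]_n -> \bar R) xi x :
  no_minf h -> convex_fun h -> h xi < +oo -> h x < +oo ->
  differentiable (rfun h) xi ->
  (fine (h xi) + dot (grad (rfun h) xi) (x - xi) <= fine (h x))%R.
Proof.
move=> hn hc hxi hx hd.
have key : ('d (rfun h) xi (x - xi) <= fine (h x) - fine (h xi))%R.
  apply: diff_upper => // t /andP [t0 t1].
  have t01 : (0 < t < 1)%R by rewrite t0 t1.
  have H := convex_finW hn hc t01 hx hxi.
  rewrite -convex_comb in H.
  have Hl := fin_lt H.
  rewrite (finE hn Hl) lee_fin in H.
  exact: (arith3 H).
have e := grad_dot (rfun h) xi (x - xi).
rewrite -e in key.
exact: (arith4 key).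
Qed.

Lemma xarith (tau fxn fx hn hi hx Bxn Bx gxn gx gxi Dn Dxn Dx L : R) :
  (tau * fxn + (tau * Bxn + tau * gxn) + Dn + Dxn <= tau * fx + (tau * Bx + tau * gx) + Dx)%R ->
  (tau * (hn - hi - (gxn - gxi)) <= tau * (L * Dn))%R ->
  (tau * (hi + (gx - gxi)) <= tau * hx)%R ->
  (tau * (fxn + hn - (fx + hx)) <= tau * (Bx - Bxn + L * Dn) + (Dx - Dxn - Dn))%R.
Proof. move=> h1 h2 h3; lra. Qed.

Lemma xstep m n (f h phip : 'cV[R]_n -> \bar R) (A : 'M[R]_(m, n)) (tau L : R)
  (xi xn x : 'cV[R]_n) (w : 'cV[R]_m) :
  no_minf f -> convex_fun f -> no_minf h -> convex_fun h ->
  no_minf phip -> convex_fun phip -> (0 < tau)%R ->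
  interior (edom phip) xi -> interior (edom phip) xn ->
  (forall u, interior (edom phip) u -> differentiable (rfun phip) u) ->
  (forall u, edom h u -> differentiable (rfun h) u) ->
  edom phip `<=` edom h ->
  (forall x x', edom phip x -> interior (edom phip) x' ->
     (h x - h x' - (dot (grad (rfun h) x') (x - x'))%:E
        <= L%:E * breg phip x x')%E) ->
  is_prox phip (fun u => tau%:E * f u) xi
      (tau *: (A^T *m w) + tau *: grad (rfun h) xi)%R xn ->
  edom phip x -> f x < +oo ->
  f xn < +oo /\
  (fine (f xn) + fine (h xn) - (fine (f x) + fine (h x)) <=
   (Bf A x w - Bf A xn w + L * Dr phip xn xi) +
   tau^-1 * (Dr phip x xi - Dr phip x xn - Dr phip xn xi))%R.
Proof.
move=> fn fc hn hc pn pc tau0 xii xni pd hd dph sm hp xd xf.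
have xie : phip xi < +oo := interior_subset xii.
have xne : phip xn < +oo := interior_subset xni.
have xd' : phip x < +oo := xd.
have Fx' : tau%:E * f x < +oo by rewrite scale_lt.
have [Fxn H] := prox_ineq pn pc (scale_no_minf tau0 fn)
   (scale_convex_fin tau0 fn (convex_finW fn fc)) xie xne (pd _ xni) hp xd' Fx'.
rewrite scale_lt // in Fxn.
split => //.
rewrite !scale_fine // in H.
rewrite !dotDl !dotZl !dot_trmx in H.
have hxi : h xi < +oo := dph _ xie.
have hxn : h xn < +oo := dph _ xne.
have hx : h x < +oo := dph _ xd.
have sm1 := sm xn xi xne xii.
rewrite (breg_fin pn xne xie) (finE hn hxi) (finE hn hxn) -!EFinB -EFinM lee_fin in sm1.
rewrite dotBr in sm1.
have sm2 := ler_wpM2l (ltW tau0) sm1.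
have gi := grad_ineq hn hc hxi hx (hd _ hxi).
rewrite dotBr in gi.
have gi2 := ler_wpM2l (ltW tau0) gi.
apply: div_step => //.
exact: (xarith H sm2 gi2).
Qed.

Lemma zarith (sigma gzn gz Bzn Bz Dn Dzn Dz : R) :
  (sigma * gzn + (- sigma) * Bzn + Dn + Dzn <= sigma * gz + (- sigma) * Bz + Dz)%R ->
  (sigma * (gzn - gz) <= sigma * (Bzn - Bz) + (Dz - Dzn - Dn))%R.
Proof. move=> h1; lra. Qed.

Lemma zstep m n (gs phid : 'cV[R]_m -> \bar R) (A : 'M[R]_(m, n)) (sigma : R)
  (zi zn z : 'cV[R]_m) (u : 'cV[R]_n) :
  no_minf gs -> convex_fun gs ->
  no_minf phid -> convex_fun phid -> (0 < sigma)%R ->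
  interior (edom phid) zi -> interior (edom phid) zn ->
  (forall u, interior (edom phid) u -> differentiable (rfun phid) u) ->
  is_prox phid (fun w => sigma%:E * gs w) zi (- sigma *: (A *m u))%R zn ->
  edom phid z -> gs z < +oo ->
  gs zn < +oo /\
  (fine (gs zn) - fine (gs z) <=
   (Bf A u zn - Bf A u z) + sigma^-1 * (Dr phid z zi - Dr phid z zn - Dr phid zn zi))%R.
Proof.
move=> gn gc pn pc s0 zii zni pd hp zd zg.
have zie : phid zi < +oo := interior_subset zii.
have zne : phid zn < +oo := interior_subset zni.
have zd' : phid z < +oo := zd.
have Fz' : sigma%:E * gs z < +oo by rewrite scale_lt.
have [Fzn H] := prox_ineq pn pc (scale_no_minf s0 gn)
   (scale_convex_fin s0 gn (convex_finW gn gc)) zie zne (pd _ zni) hp zd' Fz'.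
rewrite scale_lt // in Fzn.
split => //.
rewrite !scale_fine // in H.
rewrite !dotZl (dotC (A *m u) zn) (dotC (A *m u) z) in H.
apply: div_step => //.
exact: (zarith H).
Qed.

End Steps.
Section Combine.
Variable R : realType.
Set Implicit Arguments. Unset Strict Implicit.

Lemma quad (M tau sigma L a b Dp Dd X : R) :
  0 < tau -> 0 < sigma -> 0 < L -> sigma * tau * M ^+ 2 + tau * L <= 1 ->
  0 <= a -> 0 <= b -> 2%:R^-1 * a ^+ 2 <= Dp -> 2%:R^-1 * b ^+ 2 <= Dd ->
  X <= M * (b * a) -> X <= (tau^-1 - L) * Dp + sigma^-1 * Dd.
Proof.
move=> t0 s0 L0 hs a0 b0 ha hb hX.
have tn : tau != 0 by apply: lt0r_neq0.
have sn : sigma != 0 by apply: lt0r_neq0.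
have hM : 0 <= sigma * tau * M ^+ 2.
  by apply: mulr_ge0; [apply: mulr_ge0; exact: ltW | exact: sqr_ge0].
have htl : 0 <= 1 - tau * L - sigma * tau * M ^+ 2 by lra.
have e1 : (tau^-1 - L) * (2%:R^-1 * a ^+ 2) + sigma^-1 * (2%:R^-1 * b ^+ 2) - M * (b * a)
   = (2%:R * sigma * tau)^-1 * (tau * (sigma * M * a - b) ^+ 2
        + sigma * a ^+ 2 * (1 - tau * L - sigma * tau * M ^+ 2)).
  by field; rewrite tn sn /= ?pnatr_eq0.
have h1 : M * (b * a) <= (tau^-1 - L) * (2%:R^-1 * a ^+ 2) + sigma^-1 * (2%:R^-1 * b ^+ 2).
  rewrite -subr_ge0 e1; apply: mulr_ge0.
    rewrite invr_ge0; apply: mulr_ge0; [apply: mulr_ge0 => //; exact: ltW | exact: ltW].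
  apply: addr_ge0; first by apply: mulr_ge0; [exact: ltW | exact: sqr_ge0].
  apply: mulr_ge0 => //; apply: mulr_ge0; [exact: ltW | exact: sqr_ge0].
have tl : 0 <= tau^-1 - L.
  have -> : tau^-1 - L = tau^-1 * (1 - tau * L) by field.
  apply: mulr_ge0; first by rewrite invr_ge0 ltW.
  lra.
have h2 : (tau^-1 - L) * (2%:R^-1 * a ^+ 2) <= (tau^-1 - L) * Dp by rewrite ler_wpM2l.
have h3 : sigma^-1 * (2%:R^-1 * b ^+ 2) <= sigma^-1 * Dd.
  by rewrite ler_wpM2l // invr_ge0 ltW.
lra.
Qed.

Lemma quad0 (M tau sigma L a b Dp Dd X : R) :
  0 < tau -> 0 < sigma -> 0 < L -> sigma * tau * M ^+ 2 + tau * L <= 1 ->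
  0 <= a -> 0 <= b -> 2%:R^-1 * a ^+ 2 <= Dp -> 2%:R^-1 * b ^+ 2 <= Dd ->
  X <= M * (b * a) -> X <= tau^-1 * Dp + sigma^-1 * Dd.
Proof.
move=> t0 s0 L0 hs a0 b0 ha hb hX.
have := quad t0 s0 L0 hs a0 b0 ha hb hX.
have : 0 <= L * Dp.
  apply: mulr_ge0; first exact: ltW.
  apply: le_trans ha; apply: mulr_ge0; [by rewrite invr_ge0 ler0n | exact: sqr_ge0].
move=> h1 h2; lra.
Qed.

Lemma Bf_sumL m n (A : 'M[R]_(m, n)) (F : nat -> 'cV[R]_n) w a b :
  Bf A (\sum_(a <= i < b) F i) w = \sum_(a <= i < b) Bf A (F i) w.
Proof.
elim/big_rec2: _ => [|i y1 y2 _ <-]; last by rewrite BfDl.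
by rewrite /Bf mulmx0 dot0r.
Qed.

Lemma Bf_sumR m n (A : 'M[R]_(m, n)) (F : nat -> 'cV[R]_m) u a b :
  Bf A u (\sum_(a <= i < b) F i) = \sum_(a <= i < b) Bf A u (F i).
Proof.
elim/big_rec2: _ => [|i y1 y2 _ <-]; last by rewrite BfDr.
by rewrite /Bf dot0l.
Qed.

Lemma tele (gap E : nat -> R) (C : R) k :
  (forall i, gap i <= E i - E i.+1) -> 0 <= E k -> E 0%N <= C ->
  \sum_(0 <= i < k) gap i <= C.
Proof.
move=> hs hk h0.
suff : \sum_(0 <= i < k) gap i <= E 0%N - E k by move=> h; lra.
elim: k {hk} => [|k IH]; first by rewrite big_nil subrr.
rewrite big_nat_recr //=; have := hs k; lra.
Qed.

End Combine.
Section Final.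
Variable R : realType.
Set Implicit Arguments. Unset Strict Implicit.

Definition gapf m n (f h : 'cV[R]_n -> \bar R) (gs : 'cV[R]_m -> \bar R)
  (A : 'M[R]_(m, n)) (x : 'cV[R]_n) (z : 'cV[R]_m) (xs : nat -> 'cV[R]_n)
  (zs : nat -> 'cV[R]_m) (i : nat) : R :=
  fine (f (xs i.+1)) + fine (h (xs i.+1)) + Bf A (xs i.+1) z - fine (gs z)
  - (fine (f x) + fine (h x)) - Bf A x (zs i.+1) + fine (gs (zs i.+1)).

Definition Ef m n (phip : 'cV[R]_n -> \bar R) (phid : 'cV[R]_m -> \bar R)
  (A : 'M[R]_(m, n)) (tau sigma s : R) (x : 'cV[R]_n) (z : 'cV[R]_m)
  (xs : nat -> 'cV[R]_n) (zs : nat -> 'cV[R]_m) (i : nat) : R :=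
  tau^-1 * Dr phip x (xs i) + sigma^-1 * Dr phid z (zs i) + s * Bf A (xs i - x) (zs i - z).

Lemma primal_arith (fn hn fx hx B00 B10 B01 B11 Bx0 Bx1 Bxz B0z B1z Gn Gz L Dn
  Dx0 Dx1 ti si Dz0 Dz1 Dm Bu1 Buz Bc Bp0 Bp1 : R) :
 fn + hn - (fx + hx) <= Bx0 - B10 + L * Dn + ti * (Dx0 - Dx1 - Dn) ->
 Gn - Gz <= Bu1 - Buz + si * (Dz0 - Dz1 - Dm) ->
 Bu1 = 2%:R * B11 - B01 -> Buz = 2%:R * B1z - B0z ->
 Bc <= (ti - L) * Dn + si * Dm -> Bc = B11 - B10 - (B01 - B00) ->
 Bp0 = B00 - B0z - (Bx0 - Bxz) -> Bp1 = B11 - B1z - (Bx1 - Bxz) ->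
 fn + hn + B1z - Gz - (fx + hx) - Bx1 + Gn <=
   ti * Dx0 + si * Dz0 + (-1) * Bp0 - (ti * Dx1 + si * Dz1 + (-1) * Bp1).
Proof. move=> h1 h2 e1 e2 h3 e3 e4 e5; rewrite e4 e5; rewrite e1 e2 in h2; rewrite e3 in h3; lra. Qed.

Lemma dual_arith (fn hn fx hx B00 B10 B01 B11 Bx0 Bx1 Bxz B0z B1z Gn Gz L Dn
  Dx0 Dx1 ti si Dz0 Dz1 Dm Bxw B1w Bc Bp0 Bp1 : R) :
 Gn - Gz <= B01 - B0z + si * (Dz0 - Dz1 - Dm) ->
 fn + hn - (fx + hx) <= Bxw - B1w + L * Dn + ti * (Dx0 - Dx1 - Dn) ->
 Bxw = 2%:R * Bx1 - Bx0 -> B1w = 2%:R * B11 - B10 ->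
 - Bc <= (ti - L) * Dn + si * Dm -> Bc = B11 - B10 - (B01 - B00) ->
 Bp0 = B00 - B0z - (Bx0 - Bxz) -> Bp1 = B11 - B1z - (Bx1 - Bxz) ->
 fn + hn + B1z - Gz - (fx + hx) - Bx1 + Gn <=
   ti * Dx0 + si * Dz0 + 1 * Bp0 - (ti * Dx1 + si * Dz1 + 1 * Bp1).
Proof. move=> h1 h2 e1 e2 h3 e3 e4 e5; rewrite e4 e5; rewrite e1 e2 in h2; rewrite e3 in h3; lra. Qed.

Lemma Bexp4 m n (A : 'M[R]_(m, n)) u1 u0 w1 w0 :
  Bf A (u1 - u0) (w1 - w0) = Bf A u1 w1 - Bf A u1 w0 - (Bf A u0 w1 - Bf A u0 w0).
Proof. by rewrite BfBl !BfBr. Qed.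

Lemma Bexp2l m n (A : 'M[R]_(m, n)) u1 u0 w :
  Bf A (2%:R *: u1 - u0) w = 2%:R * Bf A u1 w - Bf A u0 w.
Proof. by rewrite BfBl BfZl. Qed.

Lemma Bexp2r m n (A : 'M[R]_(m, n)) u w1 w0 :
  Bf A u (2%:R *: w1 - w0) = 2%:R * Bf A u w1 - Bf A u w0.
Proof. by rewrite BfBr BfZr. Qed.

Lemma cross m n (np : 'cV[R]_n -> R) (nd : 'cV[R]_m -> R) (A : 'M[R]_(m, n))
  (tau sigma L Dp Dd : R) u w :
  is_norm np -> is_norm nd -> 0 < tau -> 0 < sigma -> 0 < L ->
  sigma * tau * op_norm np nd A ^+ 2 + tau * L <= 1 ->
  2%:R^-1 * np u ^+ 2 <= Dp -> 2%:R^-1 * nd w ^+ 2 <= Dd ->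
  Bf A u w <= (tau^-1 - L) * Dp + sigma^-1 * Dd /\
  - Bf A u w <= (tau^-1 - L) * Dp + sigma^-1 * Dd.
Proof.
move=> hp hd t0 s0 L0 hs ha hb; split.
  apply: (quad t0 s0 L0 hs (isn_ge0 _ hp) (isn_ge0 _ hd) ha hb).
  exact: opnorm_bound.
rewrite -BfNl; rewrite -(isnN _ hp) in ha.
apply: (quad t0 s0 L0 hs (isn_ge0 _ hp) (isn_ge0 _ hd) ha hb).
exact: opnorm_bound.
Qed.

Lemma cross0 m n (np : 'cV[R]_n -> R) (nd : 'cV[R]_m -> R) (A : 'M[R]_(m, n))
  (tau sigma L Dp Dd : R) u w :
  is_norm np -> is_norm nd -> 0 < tau -> 0 < sigma -> 0 < L ->
  sigma * tau * op_norm np nd A ^+ 2 + tau * L <= 1 ->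
  2%:R^-1 * np u ^+ 2 <= Dp -> 2%:R^-1 * nd w ^+ 2 <= Dd ->
  Bf A u w <= tau^-1 * Dp + sigma^-1 * Dd /\
  - Bf A u w <= tau^-1 * Dp + sigma^-1 * Dd.
Proof.
move=> hp hd t0 s0 L0 hs ha hb; split.
  apply: (quad0 t0 s0 L0 hs (isn_ge0 _ hp) (isn_ge0 _ hd) ha hb).
  exact: opnorm_bound.
rewrite -BfNl; rewrite -(isnN _ hp) in ha.
apply: (quad0 t0 s0 L0 hs (isn_ge0 _ hp) (isn_ge0 _ hd) ha hb).
exact: opnorm_bound.
Qed.

Lemma gap_sum m n (f h : 'cV[R]_n -> \bar R) (gs : 'cV[R]_m -> \bar R)
  (A : 'M[R]_(m, n)) x z xs zs k :
  \sum_(0 <= i < k) gapf f h gs A x z xs zs i =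
  \sum_(0 <= i < k) fine (f (xs i.+1)) + \sum_(0 <= i < k) fine (h (xs i.+1))
  + \sum_(0 <= i < k) Bf A (xs i.+1) z
  - k%:R * (fine (gs z) + (fine (f x) + fine (h x)))
  - \sum_(0 <= i < k) Bf A x (zs i.+1) + \sum_(0 <= i < k) fine (gs (zs i.+1)).
Proof.
elim: k => [|k IH]; first by rewrite !big_nil mul0r; ring.
rewrite !big_nat_recr //= IH /gapf -natr1; ring.
Qed.

End Final.
Section FinalArith.
Variable R : realType.
Set Implicit Arguments. Unset Strict Implicit.

Lemma final_arith (kk fa ha Ga fx hx Gz SBz SBx Sf Sh SG Sgap C : R) :
 0 < kk ->
 fa <= kk^-1 * Sf -> ha <= kk^-1 * Sh -> Ga <= kk^-1 * SG ->
 Sgap = Sf + Sh + SBz - kk * (Gz + (fx + hx)) - SBx + SG ->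
 Sgap <= 2%:R * C ->
 fa + ha + kk^-1 * SBz - Gz - (fx + hx + kk^-1 * SBx - Ga) <= 2%:R / kk * C.
Proof.
move=> k0 h1 h2 h3 e h4.
have kn : kk != 0 by apply: lt0r_neq0.
have ki : 0 <= kk^-1 by rewrite invr_ge0 ltW.
have h5 := ler_wpM2l ki h4.
have e2 : kk^-1 * Sgap = kk^-1 * Sf + kk^-1 * Sh + kk^-1 * SBz - (Gz + (fx + hx))
   - kk^-1 * SBx + kk^-1 * SG by rewrite e; field.
have e3 : kk^-1 * (2%:R * C) = 2%:R / kk * C by rewrite mulrA [kk^-1 * _]mulrC.
rewrite e2 e3 in h5.
lra.
Qed.

Lemma E_bounds (C B s : R) : (s = 1 \/ s = -1) -> B <= C -> - B <= C ->
  (0 <= C + s * B) /\ (C + s * B <= 2%:R * C).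
Proof. by case=> ->; move=> h1 h2; split; lra. Qed.

End FinalArith.
Theorem mainTheorem4 (R : realType) (m n : nat)
  (f h : 'cV[R]_n -> \bar R) (g : 'cV[R]_m -> \bar R) (A : 'M[R]_(m, n))
  (phip : 'cV[R]_n -> \bar R) (phid : 'cV[R]_m -> \bar R)
  (np : 'cV[R]_n -> R) (nd : 'cV[R]_m -> R) (L sigma tau : R)
  (xs : nat -> 'cV[R]_n) (zs : nat -> 'cV[R]_m) :
  (* f, g, h closed convex with values in R \cup {+oo} *)
  no_minf f -> convex_fun f -> closed_fun f ->
  no_minf g -> convex_fun g -> closed_fun g ->
  no_minf h -> convex_fun h -> closed_fun h ->
  (* h differentiable on its open (convex) domain *)
  open (edom h) -> (forall x, edom h x -> diff_at (rfun h) x) ->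
  (* f + h and g proper *)
  proper_fun (fun x => f x + h x)%E -> proper_fun g ->
  (* Bregman kernels, with well-defined prox operators *)
  bregman_kernel phip -> bregman_kernel phid ->
  prox_well_defined phip (fun x => tau%:E * f x)%E ->
  prox_well_defined phid (fun z => sigma%:E * conj_fun g z)%E ->
  (* strong convexity of the kernels w.r.t. norms *)
  is_norm np -> is_norm nd ->
  (forall x x', edom phip x -> interior (edom phip) x' ->
     ((2%:R^-1 * np (x - x') ^+ 2)%:E <= breg phip x x')%E) ->
  (forall z z', edom phid z -> interior (edom phid) z' ->
     ((2%:R^-1 * nd (z - z') ^+ 2)%:E <= breg phid z z')%E) ->
  (* relative smoothness of h *)
  edom phip `<=` edom h -> 0 < L ->
  (forall x x', edom phip x -> interior (edom phip) x' ->
     (h x - h x' - (dot (grad (rfun h) x') (x - x'))%:E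
        <= L%:E * breg phip x x')%E) ->
  (* existence of a saddle point *)
  (exists (xst : 'cV[R]_n) (zst : 'cV[R]_m),
     [/\ edom phip xst, edom phid zst,
         exists s, subgrad f xst s /\ s + grad (rfun h) xst + A^T *m zst = 0 &
         subgrad (conj_fun g) zst (A *m xst)]) ->
  (* step sizes *)
  0 < sigma -> 0 < tau ->
  sigma * tau * op_norm np nd A ^+ 2 + tau * L <= 1 ->
  (* initial point and iteration *)
  interior (edom phip) (xs 0%N) -> edom h (xs 0%N) ->
  interior (edom phid) (zs 0%N) ->
  (primal_CV phip phid f h (conj_fun g) A sigma tau xs zs \/
   dual_CV phip phid f h (conj_fun g) A sigma tau xs zs) ->
  forall (k : nat) (x : 'cV[R]_n) (z : 'cV[R]_m), (1 <= k)%N ->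
    edom f x -> edom phip x -> edom (conj_fun g) z -> edom phid z ->
    (lagr f h (conj_fun g) A (avg xs k) z - lagr f h (conj_fun g) A x (avg zs k)
     <= (2 / k%:R)%:E * ((tau^-1)%:E * breg phip x (xs 0%N)
                         + (sigma^-1)%:E * breg phid z (zs 0%N)))%E.
Proof.
move=> fn fc _ gn gc _ hn hc _ _ hdiff _ [_ [y0 gy0]] kp kd proxp proxd normp normd
  scp scd dph L0 sm _ s0 t0 stp x0i x0h z0i alg k x z k1 xf xpd zg zdd.
have gsn : no_minf (conj_fun g) := conj_no_minf gn (ex_intro _ y0 gy0).
have gsc : convex_fun (conj_fun g) := conj_convex gn.
case: kp => pn pc _ [_ pdiff _].
case: kd => qn qc _ [_ qdiff _].
have int_of : forall (nn : nat) (phi F : 'cV[R]_nn -> \bar R) y a xn,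
   prox_well_defined phi F -> interior (edom phi) y -> is_prox phi F y a xn ->
   interior (edom phi) xn.
  move=> nn phi F y a xn hw hy hp; have [x' [hi _ hu]] := hw a y hy.
  by rewrite (hu _ hp).
have ints : forall i, interior (edom phip) (xs i) /\ interior (edom phid) (zs i).
  elim => [|i [hxi hzi]]; first by split.
  case: alg => H; have [H1 H2] := H i; split.
  - exact: int_of proxp hxi H1.
  - exact: int_of proxd hzi H2.
  - exact: int_of proxp hxi H2.
  - exact: int_of proxd hzi H1.
have dom_x : forall i, (phip (xs i) < +oo)%E := fun i => interior_subset (ints i).1.
have dom_z : forall i, (phid (zs i) < +oo)%E := fun i => interior_subset (ints i).2.
have scpR : forall u v, (phip u < +oo)%E -> interior (edom phip) v ->
    2%:R^-1 * np (u - v) ^+ 2 <= Dr phip u v.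
  move=> u v hu hv; have := scp u v hu hv.
  by rewrite (breg_fin pn hu (interior_subset hv)) lee_fin.
have scdR : forall u v, (phid u < +oo)%E -> interior (edom phid) v ->
    2%:R^-1 * nd (u - v) ^+ 2 <= Dr phid u v.
  move=> u v hu hv; have := scd u v hu hv.
  by rewrite (breg_fin qn hu (interior_subset hv)) lee_fin.
have psi : forall i,
    Bf A (xs i - x) (zs i - z) <= tau^-1 * Dr phip x (xs i) + sigma^-1 * Dr phid z (zs i) /\
    - Bf A (xs i - x) (zs i - z) <= tau^-1 * Dr phip x (xs i) + sigma^-1 * Dr phid z (zs i).
  move=> i.
  have a1 := scpR x (xs i) xpd (ints i).1.
  rewrite (isnB x (xs i) normp) in a1.
  have a2 := scdR z (zs i) zdd (ints i).2.
  rewrite (isnB z (zs i) normd) in a2.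
  exact: (@cross0 R m n np nd A tau sigma L (Dr phip x (xs i)) (Dr phid z (zs i))
     (xs i - x) (zs i - z) normp normd t0 s0 L0 stp a1 a2).
have steps : exists s : R, (s = 1 \/ s = -1) /\ forall i,
  [/\ (f (xs i.+1) < +oo)%E, (conj_fun g (zs i.+1) < +oo)%E &
     gapf f h (conj_fun g) A x z xs zs i <=
     Ef phip phid A tau sigma s x z xs zs i - Ef phip phid A tau sigma s x z xs zs i.+1].
  case: alg => H.
  - exists (-1); split; first by right.
    move=> i; have [H1 H2] := H i.
    have [fxn Xi] := @xstep R m n f h phip A tau L (xs i) (xs i.+1) x (zs i) fn fc hn hc
      pn pc t0 (ints i).1 (ints i.+1).1 pdiff hdiff dph sm H1 xpd xf.
    have [gzn Zi] := @zstep R m n (conj_fun g) phid A sigma (zs i) (zs i.+1) z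
      (2%:R *: xs i.+1 - xs i) gsn gsc qn qc s0 (ints i).2 (ints i.+1).2 qdiff H2 zdd zg.
    have [Ci _] := @cross R m n np nd A tau sigma L (Dr phip (xs i.+1) (xs i))
      (Dr phid (zs i.+1) (zs i)) (xs i.+1 - xs i) (zs i.+1 - zs i) normp normd t0 s0 L0 stp
      (scpR _ _ (dom_x i.+1) (ints i).1) (scdR _ _ (dom_z i.+1) (ints i).2).
    split => //.
    rewrite /gapf /Ef.
    exact: (primal_arith Xi Zi (Bexp2l A (xs i.+1) (xs i) (zs i.+1))
      (Bexp2l A (xs i.+1) (xs i) z) Ci (Bexp4 A (xs i.+1) (xs i) (zs i.+1) (zs i))
      (Bexp4 A (xs i) x (zs i) z) (Bexp4 A (xs i.+1) x (zs i.+1) z)).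
  - exists 1; split; first by left.
    move=> i; have [H1 H2] := H i.
    have [gzn Zi] := @zstep R m n (conj_fun g) phid A sigma (zs i) (zs i.+1) z
      (xs i) gsn gsc qn qc s0 (ints i).2 (ints i.+1).2 qdiff H1 zdd zg.
    have [fxn Xi] := @xstep R m n f h phip A tau L (xs i) (xs i.+1) x
      (2%:R *: zs i.+1 - zs i) fn fc hn hc
      pn pc t0 (ints i).1 (ints i.+1).1 pdiff hdiff dph sm H2 xpd xf.
    have [_ Ci] := @cross R m n np nd A tau sigma L (Dr phip (xs i.+1) (xs i))
      (Dr phid (zs i.+1) (zs i)) (xs i.+1 - xs i) (zs i.+1 - zs i) normp normd t0 s0 L0 stp
      (scpR _ _ (dom_x i.+1) (ints i).1) (scdR _ _ (dom_z i.+1) (ints i).2).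
    split => //.
    rewrite /gapf /Ef.
    exact: (dual_arith Zi Xi (Bexp2r A x (zs i.+1) (zs i))
      (Bexp2r A (xs i.+1) (zs i.+1) (zs i)) Ci (Bexp4 A (xs i.+1) (xs i) (zs i.+1) (zs i))
      (Bexp4 A (xs i) x (zs i) z) (Bexp4 A (xs i.+1) x (zs i.+1) z)).
have [s [hs st]] := steps.
have fxs : forall i, (f (xs i.+1) < +oo)%E by move=> i; case: (st i).
have gzs : forall i, (conj_fun g (zs i.+1) < +oo)%E by move=> i; case: (st i).
have stg : forall i, gapf f h (conj_fun g) A x z xs zs i <=
     Ef phip phid A tau sigma s x z xs zs i - Ef phip phid A tau sigma s x z xs zs i.+1.
  by move=> i; case: (st i).
have Eb : forall i, (0 <= Ef phip phid A tau sigma s x z xs zs i) /\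
    (Ef phip phid A tau sigma s x z xs zs i <=
    2%:R * (tau^-1 * Dr phip x (xs i) + sigma^-1 * Dr phid z (zs i))).
  move=> i; have [p1 p2] := psi i; rewrite /Ef; exact: (E_bounds hs p1 p2).
have sumb := tele stg (Eb k).1 (Eb 0%N).2.
have hrf : forall i, (0 < i)%N -> (f (xs i) <= (fine (f (xs i)))%:E)%E.
  by case => [//|j] _; rewrite -(finE fn (fxs j)).
have hrh : forall i, (0 < i)%N -> (h (xs i) <= (fine (h (xs i)))%:E)%E.
  by case => [//|j] _; rewrite -(finE hn (dph _ (dom_x j.+1))).
have hrg : forall i, (0 < i)%N -> (conj_fun g (zs i) <= (fine (conj_fun g (zs i)))%:E)%E.
  by case => [//|j] _; rewrite -(finE gsn (gzs j)).
have jf := @jensen R n f xs (fun i => fine (f (xs i))) fc hrf k k1.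
have jh := @jensen R n h xs (fun i => fine (h (xs i))) hc hrh k k1.
have jg := @jensen R m (conj_fun g) zs (fun i => fine (conj_fun g (zs i))) gsc hrg k k1.
have faf := fin_lt jf.
have haf := fin_lt jh.
have gaf := fin_lt jg.
rewrite (finE fn faf) lee_fin big_add1 in jf.
rewrite (finE hn haf) lee_fin big_add1 in jh.
rewrite (finE gsn gaf) lee_fin big_add1 in jg.
have hx : (h x < +oo)%E := dph _ xpd.
have eBx : dot z (A *m avg xs k) = k%:R^-1 * \sum_(0 <= i < k) Bf A (xs i.+1) z.
  by change (Bf A (avg xs k) z = k%:R^-1 * \sum_(0 <= i < k) Bf A (xs i.+1) z); rewrite /avg BfZl Bf_sumL big_add1.
have eBz : dot (avg zs k) (A *m x) = k%:R^-1 * \sum_(0 <= i < k) Bf A x (zs i.+1).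
  by change (Bf A x (avg zs k) = k%:R^-1 * \sum_(0 <= i < k) Bf A x (zs i.+1)); rewrite /avg BfZr Bf_sumR big_add1.
rewrite /lagr (finE fn faf) (finE hn haf) (finE gsn gaf) (finE fn xf) (finE hn hx)
  (finE gsn zg) -!EFinD !ltry /=.
rewrite (breg_fin pn xpd (dom_x 0%N)) (breg_fin qn zdd (dom_z 0%N)).
rewrite eBx eBz.
rewrite -!EFinM -!EFinD lee_fin.
rewrite /= in jf jh jg.
have k0 : 0 < k%:R :> R by rewrite ltr0n.
exact: (final_arith k0 jf jh jg (gap_sum f h (conj_fun g) A x z xs zs k) sumb).
Qed.
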